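(* Let $k$ be a field and let $d,m$ be integers with $d$ even and $2 \le d < m-1$. Set $a=(d+2)/2$. Then \[ k[\Delta(d,m)] \cong k[x_1,\dots,x_m]/(I_{a,1,m-1},\, I_{a,2,m}), \] i.e. the Stanley–Reisner ideal of $\Delta(d,m)$ (with vertices labeled as below) is the ideal of $k[x_1,\dots,x_m]$ generated by $I_{a,1,m-1}$ and $I_{a,2,m}$.
   Context: For integers $2\le d<m$, fix real numbers $t_1<t_2<\dots<t_m$ and let $C_d(m)\subset\mathbb{R}^d$ be the cyclic polytope, the convex hull of the points $f(t_1),\dots,f(t_m)$ where $f(t)=(t,t^2,\dots,t^d)$. It is a simplicial $d$-polytope whose combinatorial type does not depend on the choice of the $t_i$. $\Delta(d,m)$ denotes its boundary simplicial complex on the vertex set $\{1,\dots,m\}$ (vertex $i$ corresponding to $f(t_i)$): its faces are the empty set and the vertex sets of proper faces of $C_d(m)$. For a simplicial complex $\Delta$ on $\{1,\dots,m\}$, its Stanley–Reisner ring is $k[\Delta]=k[x_1,\dots,x_m]/I_\Delta$, where $I_\Delta$ is generated by the squarefree monomials $\prod_{t\in W}x_t$ with $W\notin\Delta$. For positive integers $a,p,q$ with $p<q$ and $2a\le q-p+2$, $I_{a,p,q}$ denotes the ideal of $k[x_p,\dots,x_q]$ (and also its extension to any larger polynomial ring) generated by all monomials $x_{t_1}x_{t_2}\cdots x_{t_a}$ with $p\le t_1$, $t_a\le q$ and $t_j+2\le t_{j+1}$ for $1\le j\le a-1$. *)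

(* Defs.v *)
From HB Require Import structures.
From mathcomp Require Import all_boot all_order all_algebra.
From mathcomp Require Import reals.
From mathcomp Require Import mpoly.

Set Implicit Arguments.
Unset Strict Implicit.
Unset Printing Implicit Defensive.

Import Order.TTheory GRing.Theory Num.Theory.
Local Open Scope ring_scope.

(* Convention: vertex j of Delta(d,m) (1 <= j <= m) is the ordinal
   (j-1 : 'I_m); the variable x_j of k[x_1,...,x_m] is 'X_(j-1). *)

(* Value of the linear functional c on the moment-curve point
   f(s) = (s, s^2, ..., s^d). *)
Definition moment_lin (R : realType) (d : nat) (c : 'rV[R]_d) (s : R) : R :=
  \sum_(j < d) c 0 j * s ^+ j.+1.

(* W (a set of vertices) is the vertex set of a proper face of the cyclic
   polytope conv{f(t_1),...,f(t_m)}: there is a supporting hyperplane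
   {y | <c,y> = b}, c <> 0, with all vertices in {<c,y> <= b} and the vertices
   lying on it exactly those of W. *)
Definition cyclic_proper_face (R : realType) (d m : nat) (t : 'I_m -> R)
    (W : {set 'I_m}) : Prop :=
  exists (c : 'rV[R]_d) (b : R), c != 0 /\
    forall i : 'I_m, moment_lin c (t i) <= b /\
                     ((moment_lin c (t i) == b) = (i \in W)).

Definition cyclic_face (R : realType) (d m : nat) (t : 'I_m -> R)
    (W : {set 'I_m}) : Prop :=
  W = set0 \/ cyclic_proper_face d t W.

Definition sqfree_mon (k : fieldType) (m : nat) (W : {set 'I_m}) : {mpoly k[m]} :=
  \prod_(i in W) 'X_i.

Definition ideal_gen (k : fieldType) (m : nat) (S : {mpoly k[m]} -> Prop)
    : {mpoly k[m]} -> Prop :=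
  fun p => exists l : seq ({mpoly k[m]} * {mpoly k[m]}),
    (forall x, x \in l -> S x.2) /\ p = \sum_(x <- l) x.1 * x.2.

Definition SR_ideal (k : fieldType) (m : nat) (face : {set 'I_m} -> Prop)
    : {mpoly k[m]} -> Prop :=
  ideal_gen (fun g => exists W : {set 'I_m}, ~ face W /\ g = @sqfree_mon k m W).

(* Generators of I_{a,p,q} (1-based p, q): monomials x_{t_1}...x_{t_a}
   with p <= t_1, t_a <= q, t_j + 2 <= t_{j+1}; i.e. products over sets W of
   a vertices in [p,q] any two of which differ by at least 2. *)
Definition Iapq_gen (k : fieldType) (m a p q : nat) (g : {mpoly k[m]}) : Prop :=
  exists W : {set 'I_m},
    [/\ #|W| = a,
        (forall i : 'I_m, i \in W -> (p <= i.+1 <= q)%N),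
        (forall i j : 'I_m, i \in W -> j \in W -> (i < j)%N -> (i.+2 <= j)%N)
      & g = @sqfree_mon k m W].

Definition Iapq (k : fieldType) (m a p q : nat) : {mpoly k[m]} -> Prop :=
  @ideal_gen k m (@Iapq_gen k m a p q).
Arguments Iapq_gen : clear implicits.
Arguments Iapq : clear implicits.

(* Main.v *)
Require Import Defs.
From HB Require Import structures.
From mathcomp Require Import all_boot all_order all_algebra.
From mathcomp Require Import reals.
From mathcomp Require Import mpoly.
From mathcomp Require Import zify.
From Stdlib Require Import Classical.
Import Order.TTheory GRing.Theory Num.Theory.
Set Implicit Arguments.
Unset Strict Implicit.
Unset Printing Implicit Defensive.
Local Open Scope ring_scope.

Section Ideal.
Variables (k : fieldType) (m : nat).
Implicit Types (S T : {mpoly k[m]} -> Prop).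

Lemma ig0 S : ideal_gen S 0.
Proof. by exists [::]; rewrite big_nil. Qed.

Lemma igD S p q : ideal_gen S p -> ideal_gen S q -> ideal_gen S (p + q).
Proof.
move=> [l1 [h1 ->]] [l2 [h2 ->]]; exists (l1 ++ l2); split; last by rewrite big_cat.
by move=> x; rewrite mem_cat => /orP[/h1|/h2].
Qed.

Lemma igM S h p : ideal_gen S p -> ideal_gen S (h * p).
Proof.
move=> [l [hl ->]]; exists [seq (h * x.1, x.2) | x <- l]; split.
  by move=> x /mapP [y yl ->] /=; apply: hl.
by rewrite big_map mulr_sumr; apply: eq_bigr => x _; rewrite mulrA.
Qed.

Lemma igG S g : S g -> ideal_gen S g.
Proof.
by move=> Sg; exists [:: (1, g)]; split; [move=> x; rewrite inE => /eqP -> | rewrite big_seq1 mul1r].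
Qed.

Lemma igmono S T p : (forall g, S g -> ideal_gen T g) -> ideal_gen S p -> ideal_gen T p.
Proof.
move=> hST [l [hl ->]]; elim: l hl => [|x l IH] hl; first by rewrite big_nil; apply: ig0.
rewrite big_cons; apply: igD; last by apply: IH => y yl; apply: hl; rewrite inE yl orbT.
by apply: igM; apply: hST; apply: hl; rewrite inE eqxx.
Qed.

Lemma mon_split (W S : {set 'I_m}) : S \subset W ->
  sqfree_mon k W = sqfree_mon k (W :\: S) * sqfree_mon k S.
Proof.
by move=> sSW; rewrite /sqfree_mon (big_setID S) /= mulrC (setIidPr sSW).
Qed.
End Ideal.

Section DD.
Variable F : fieldType.
Lemma divdiff (I : finType) (U : {set I}) (x : I -> F) (q : {poly F}) :
  {in U &, injective x} -> (size q < #|U|)%N ->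
  \sum_(i in U) q.[x i] / \prod_(j in U :\ i) (x i - x j) = 0.
Proof.
move=> xinj hq.
pose w i := \prod_(j in U :\ i) (x i - x j).
pose L i := \prod_(j in U :\ i) ('X - (x j)%:P).
pose r := \sum_(i in U) (q.[x i] / w i) *: L i.
have wn0 : forall i, i \in U -> w i != 0.
  move=> i iU; apply/prodf_neq0 => j /setD1P [ji jU].
  by rewrite subr_eq0; apply/eqP => /xinj eq; rewrite eq ?eqxx in ji.
have sL : forall i, i \in U -> size (L i) = #|U|.
  by move=> i iU; rewrite /L -big_enum size_prod_XsubC -cardE (cardsD1 i U) iU.
have mL : forall i, L i \is monic by move=> i; rewrite /L -big_enum monic_prod_XsubC.
have rk : forall k, k \in U -> r.[x k] = q.[x k].
  move=> k kU; rewrite /r horner_sum (bigD1 k) //= big1 ?addr0.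
    rewrite hornerZ /L horner_prod.
    under eq_bigr do rewrite hornerXsubC.
    by rewrite divfK // wn0.
  move=> i /andP [iU ik]; rewrite hornerZ /L horner_prod (bigD1 k) /=.
    by rewrite hornerXsubC subrr mul0r mulr0.
  by rewrite !inE eq_sym ik kU.
have szr : (size r <= #|U|)%N.
  apply: (leq_trans (size_sum _ _ _)); apply/bigmax_leqP => i iU.
  by apply: (leq_trans (size_scale_leq _ _)); rewrite sL.
have rq : r = q.
  apply/eqP; rewrite -subr_eq0; apply: contraT => nz.
  have := max_poly_roots nz (rs := map x (enum U)).
  rewrite size_map -cardE.
  have -> : all (root (r - q)) [seq x i | i <- enum U].
    apply/allP => y /mapP [i iin ->]; rewrite mem_enum in iin.
    by rewrite /root hornerD hornerN rk // subrr.
  rewrite map_inj_in_uniq ?enum_uniq; last first.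
    by move=> a b; rewrite !mem_enum; apply: xinj.
  move=> /(_ isT isT); rewrite ltnNge => /negP H; exfalso; apply: H.
  apply: (leq_trans (size_polyD _ _)); rewrite size_polyN geq_max szr /=.
  exact: ltnW.
have U0 : (0 < #|U|)%N by apply: leq_ltn_trans hq.
have := congr1 (fun p : {poly F} => p`_(#|U|.-1)) rq.
have hq' : (size q <= #|U|.-1)%N by rewrite -ltnS prednK.
rewrite /= (nth_default _ hq').
rewrite /r coef_sum => h; rewrite -[RHS]h; apply: eq_bigr => i iU.
rewrite coefZ.
have : lead_coef (L i) = 1 by apply/monicP.
by rewrite lead_coefE sL // => ->; rewrite mulr1.
Qed.
End DD.

Section Key.
Variables (R : realType) (M : nat) (t : 'I_M.+1 -> R).
Hypothesis tmono : forall i j : 'I_M.+1, (i < j)%N -> t i < t j.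

Lemma tinj : injective t.
Proof.
move=> i j e; apply/val_inj/eqP; case: (ltngtP i j) => [h|h|//].
  by have := tmono h; rewrite e ltxx.
by have := tmono h; rewrite e ltxx.
Qed.

Lemma tle (i j : 'I_M.+1) : (i <= j)%N -> t i <= t j.
Proof. by rewrite leq_eqVlt => /orP [/eqP/val_inj -> // | /tmono/ltW]. Qed.

Lemma key1 n (S : {set 'I_M.+1}) (P : {poly R}) :
  #|S| = n.+1 ->
  (forall i j : 'I_M.+1, i \in S -> j \in S -> (i < j)%N -> (i.+2 <= j)%N) ->
  (forall i : 'I_M.+1, i \in S -> (i < M)%N) ->
  (size P <= n.*2.+1)%N ->
  (forall i, P.[t i] <= 0) -> (forall i, i \in S -> P.[t i] = 0) -> P = 0.
Proof.
move=> cS spS ltS szP Ple PS.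
pose f (s : 'I_M.+1) : 'I_M.+1 := inord s.+1.
have fv : forall s, s \in S -> (f s : nat) = s.+1.
  by move=> s sS; rewrite /f inordK // ltnS ltS.
have finj : {in S &, injective f}.
  by move=> a b aS bS e; apply/val_inj; have := congr1 (@nat_of_ord _) e; rewrite !fv // => -[].
pose T := f @: S.
have TnS : forall j, j \in T -> j \notin S.
  move=> j /imsetP [s sS ->]; apply/negP => fS.
  have := spS s (f s) sS fS; rewrite fv // ltnSn => /(_ isT).
  by rewrite ltnn.
have cT : #|T| = n.+1 by rewrite card_in_imset.
pose U := S :|: T.
have ST0 : S :&: T = set0.
  apply/setP => j; rewrite !inE; apply/negP => /andP [jS jT].
  by have := TnS j jT; rewrite jS.
have cU : #|U| = n.*2.+2 by rewrite cardsU ST0 cards0 cT cS; lia.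
have tinjU : {in U &, injective t} by move=> a b _ _; apply: tinj.
have dST : [disjoint S & T] by rewrite -setI_eq0 ST0.
pose w i := \prod_(j in U :\ i) (t i - t j).
have wpos : forall i, i \in T -> 0 < w i.
  move=> i /imsetP [s sS ->]; rewrite /w.
  rewrite (bigID (fun j : 'I_M.+1 => (j < f s)%N)) /=; apply: mulr_gt0.
    by apply: prodr_gt0 => j /andP [_ jl]; rewrite subr_gt0; apply: tmono.
  pose A := [set j in U :\ f s | ~~ (j < f s)%N].
  rewrite (eq_bigl (fun j => j \in A)); last by move=> j; rewrite !inE.
  rewrite (eq_bigr (fun j => - (t j - t (f s)))); last by move=> j _; rewrite opprB.
  rewrite prodrN -signr_odd.
  pose B := [set j in S | (s < j)%N].
  have BT : f @: B \subset T.
    by apply: imsetS; apply/subsetP => x; rewrite inE => /andP [].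
  have AE : A = B :|: f @: B.
    apply/setP => j; rewrite !inE.
    have [jS|jS] := boolP (j \in S).
      have jT : j \notin T by apply: contraL jS; apply: TnS.
      have jfB : (j \in f @: B) = false.
        by apply/negbTE; apply: contra jT; apply: (subsetP BT).
      rewrite jfB (negbTE jT) orbF andbT /= fv // ltnS -ltnNge.
      have -> : (j != f s) = true; last by rewrite /= orbF.
      by apply/eqP => e; move: jT; rewrite e (imset_f f sS).
    rewrite /=.
    have [jT'|jT'] := boolP (j \in T); last first.
      rewrite /= andbF /=; apply/esym/negbTE; apply: contra jT'; apply: (subsetP BT).
    case/imsetP: jT' => s' s'S ->.
    have -> : (f s' \in f @: B) = (s' \in B).
      apply/imsetP/idP => [[b bB e]|s'B]; last by exists s'.
      move: (bB); rewrite inE => /andP [bS _].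
      by rewrite (finj _ _ s'S bS e).
    rewrite inE s'S /= andbT.
    have -> : (f s' != f s) = (s' != s).
      by apply/idP/idP; apply: contra => /eqP e; [rewrite e | rewrite (finj _ _ s'S sS e)].
    rewrite !fv // ltnS -leqNgt ltn_neqAle.
    by rewrite -(inj_eq val_inj) /= eq_sym.
  have BfB0 : B :&: f @: B = set0.
    apply/setP => j; rewrite !inE; apply/negP => /andP [jB jfB].
    have : j \in T by apply: (subsetP BT).
    by move/TnS; case/andP: jB => ->.
  have cA : odd #|A| = false.
    rewrite AE cardsU BfB0 cards0 subn0 card_in_imset ?addnn ?odd_double //.
    by move=> a b; rewrite !inE => /andP [aS _] /andP [bS _]; apply: finj.
  rewrite cA expr0 mul1r; apply: prodr_gt0 => j; rewrite inE => /andP [/setD1P [jne _]].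
  rewrite -leqNgt => h; rewrite subr_gt0; apply: tmono; rewrite ltn_neqAle h andbT eq_sym; exact: jne.
have dd := @divdiff _ _ U t P tinjU.
have {dd} dd : \sum_(i in T) P.[t i] / w i = 0.
  have h : (size P < #|U|)%N by rewrite cU ltnS.
  move: (dd h); rewrite (eq_bigl [predU S & T]); last by move=> i; rewrite !inE.
  rewrite bigU // big1 /=; first by rewrite add0r.
  by move=> i iS; rewrite PS // mul0r.
have PT : forall i, i \in T -> P.[t i] = 0.
  have h1 : forall i, i \in T -> 0 <= - (P.[t i] / w i).
    move=> j jT; rewrite oppr_ge0; apply: mulr_le0_ge0 => //.
    by rewrite invr_ge0 ltW // wpos.
  have h2 : \sum_(i in T) - (P.[t i] / w i) = 0 by rewrite sumrN dd oppr0.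
  move=> i iT; have := psumr_eq0P h1 h2 iT.
  move/eqP; rewrite oppr_eq0 mulf_eq0 invr_eq0 (gt_eqF (wpos _ iT)) orbF.
  by move/eqP.
apply/eqP; apply: contraT => nz.
have := max_poly_roots nz (rs := map t (enum U)).
rewrite size_map -cardE cU.
have -> : all (root P) [seq t i | i <- enum U].
  apply/allP => y /mapP [i iin ->]; rewrite mem_enum !inE in iin.
  by rewrite /root; case/orP: iin => [/PS|/PT] ->.
rewrite map_inj_in_uniq ?enum_uniq; last by move=> a b _ _; apply: tinj.
by move=> /(_ isT isT); rewrite ltnNge (leq_trans szP).
Qed.
End Key.

Lemma key2 (R : realType) (M : nat) (t : 'I_M.+1 -> R) n (S : {set 'I_M.+1}) (P : {poly R}) :
  (forall i j : 'I_M.+1, (i < j)%N -> t i < t j) ->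
  #|S| = n.+1 ->
  (forall i j : 'I_M.+1, i \in S -> j \in S -> (i < j)%N -> (i.+2 <= j)%N) ->
  (forall i : 'I_M.+1, i \in S -> (0 < i)%N) ->
  (size P <= n.*2.+1)%N ->
  (forall i, P.[t i] <= 0) -> (forall i, i \in S -> P.[t i] = 0) -> P = 0.
Proof.
move=> tmono cS spS gtS szP Ple PS.
pose t' (i : 'I_M.+1) := - t (rev_ord i).
have t'mono : forall i j : 'I_M.+1, (i < j)%N -> t' i < t' j.
  move=> i j ij; rewrite /t' ltrN2; apply: tmono => /=.
  have := ltn_ord i; have := ltn_ord j; lia.
pose P' := P \Po (- 'X).
have hP' : forall x, P'.[x] = P.[- x] by move=> x; rewrite horner_comp hornerN hornerX.
pose S' := (@rev_ord M.+1) @: S.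
have : P' = 0.
  apply: (@key1 R M t' t'mono n S' P').
  - by rewrite card_imset //; apply: rev_ord_inj.
  - move=> i j /imsetP [a aS ->] /imsetP [b bS ->] /= h.
    have ba : (b < a)%N by have := ltn_ord a; have := ltn_ord b; lia.
    have := spS _ _ bS aS ba; have := ltn_ord a; have := ltn_ord b; lia.
  - move=> i /imsetP [a aS ->] /=; have := gtS _ aS; have := ltn_ord a; lia.
  - apply: (leq_trans (size_comp_poly_leq _ _)).
    rewrite size_polyN size_polyX muln1.
    by move: szP; case: (size P).
  - by move=> i; rewrite hP' /t' opprK.
  - by move=> i /imsetP [a aS ->]; rewrite hP' /t' opprK rev_ordK PS.
by move/eqP; rewrite comp_poly_eq0 ?size_polyN ?size_polyX // => /eqP.
Qed.

Definition mpol (R : realType) (d : nat) (c : 'rV[R]_d) (b : R) : {poly R} :=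
  \sum_(j < d) c 0 j *: 'X^(j.+1) - b%:P.

Lemma mpolE (R : realType) d (c : 'rV[R]_d) b s : (mpol c b).[s] = moment_lin c s - b.
Proof.
rewrite /mpol hornerD hornerN hornerC horner_sum /moment_lin; congr (_ - _).
by apply: eq_bigr => j _; rewrite hornerZ hornerXn.
Qed.

Lemma mpol_size (R : realType) d (c : 'rV[R]_d) b : (size (mpol c b) <= d.+1)%N.
Proof.
rewrite /mpol; apply: (leq_trans (size_polyD _ _)); rewrite geq_max; apply/andP; split.
  apply: (leq_trans (size_sum _ _ _)); apply/bigmax_leqP => j _.
  apply: (leq_trans (size_scale_leq _ _)); rewrite size_polyXn; exact: ltn_ord.
by rewrite size_polyN; apply: (leq_trans (size_polyC_leq1 _)).
Qed.

Lemma mpol_eq0 (R : realType) d (c : 'rV[R]_d) b : mpol c b = 0 -> c = 0.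
Proof.
move=> h; apply/rowP => j; rewrite mxE.
have := congr1 (fun p : {poly R} => p`_j.+1) h.
rewrite /mpol coefB coefC /= subr0 coef_sum coef0 => <-.
rewrite (bigD1 j) //= coefZ coefXn eqxx mulr1 big1 ?addr0 //.
move=> i ij; rewrite coefZ coefXn eqSS.
by rewrite (_ : (j == i :> nat) = false) ?mulr0 //; apply/negbTE; rewrite eq_sym.
Qed.

Lemma poly_mpol (R : realType) d (Q : {poly R}) s : (size Q <= d.+1)%N ->
  Q.[s] = moment_lin (\row_(j < d) Q`_j.+1) s - (- Q`_0).
Proof.
move=> hQ; rewrite (horner_coef_wide _ hQ) big_ord_recl /= expr0 mulr1 opprK addrC.
congr (_ + _); apply: eq_bigr => j _; by rewrite mxE.
Qed.

Fixpoint runl (p : nat -> bool) (k : nat) : nat :=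
  match k with 0 => nat_of_bool (p 0) | k'.+1 => if p k'.+1 then (runl p k').+1 else 0 end.

Lemma runl_gt0 p k : (0 < runl p k)%N = p k.
Proof. by case: k => [|k] /=; [case: (p 0) | case: (p k.+1)]. Qed.

Section Comb.
Variable M : nat.
Definition sc (i : 'I_M.+1) : 'I_M.+1 := inord (if (i : nat) == M then 0%N else i.+1).
Lemma scv i : (sc i : nat) = if (i : nat) == M then 0%N else i.+1.
Proof. rewrite /sc inordK //; case: ifP => // /negbT h; have := ltn_ord i; lia. Qed.

Lemma comb (W : {set 'I_M.+1}) (j : 'I_M.+1) : j \notin W ->
  exists G : {set 'I_M.+1}, [/\ G \subset W,
     (forall g, g \in G -> sc g \notin G) &
     (forall w, w \in W -> w \in G \/ exists2 g, g \in G & w = sc g)].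
Proof.
move=> jW.
pose rinv (k : nat) : 'I_M.+1 := inord (if (k + j + 1 <= M)%N then k + j + 1 else k + j - M)%N.
pose rho (w : 'I_M.+1) : nat := if (j < w)%N then (w - j - 1)%N else (w + M - j)%N.
have jM := ltn_ord j.
have rinvv : forall k, (k <= M)%N -> (rinv k : nat) = if (k + j + 1 <= M)%N then (k + j + 1)%N else (k + j - M)%N.
  by move=> k kM; rewrite /rinv inordK //; case: ifP => ?; lia.
have rhoM : forall w, (rho w <= M)%N.
  by move=> w; rewrite /rho; have := ltn_ord w; case: ifP => ?; lia.
have rinv_rho : forall w, rinv (rho w) = w.
  move=> w; apply/val_inj => /=; rewrite /rho; have := ltn_ord w.
  by case: (ltnP j w) => h1 h2; rewrite rinvv; try lia; case: ifP => ?; lia.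
have rho_rinv : forall k, (k <= M)%N -> rho (rinv k) = k.
  move=> k kM; rewrite /rho rinvv //.
  by case: (leqP (k + j + 1) M) => h1; case: ifP => ?; lia.
have sc_rinv : forall k, (k < M)%N -> sc (rinv k) = rinv k.+1.
  move=> k kM; apply/val_inj => /=; rewrite scv !rinvv; try lia.
  by case: (leqP (k + j + 1) M) => h1; case: ifP => /eqP ?; case: ifP => ?; lia.
have rho_sc : forall g, g != j -> rho (sc g) = (rho g).+1.
  move=> g /eqP gj; have gj' : (g : nat) <> j by move=> e; apply: gj; apply: val_inj.
  rewrite /rho scv; have := ltn_ord g.
  by case: (ltnP j g) => h1; case: (eqVneq (g : nat) M) => h2 /=; try case: ifP => ?; lia.
pose inW k := rinv k \in W.
pose G := [set w in W | odd (runl inW (rho w))].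
exists G; split.
- by apply/subsetP => x; rewrite inE => /andP [].
- move=> g; rewrite !inE => /andP [gW og]; apply/negP => /andP [sgW].
  have gj : g != j by apply: contraNneq jW => <-.
  rewrite rho_sc //= /inW -rho_sc // rinv_rho sgW /=.
  by rewrite og.
- move=> w wW.
  have [ow|ew] := boolP (odd (runl inW (rho w))); first by left; rewrite inE wW.
  right.
  have r1 : (0 < runl inW (rho w))%N by rewrite runl_gt0 /inW rinv_rho.
  case E : (rho w) => [|k] in ew r1.
    by move: ew r1 => /=; case: (inW 0).
  move: ew r1 => /=; have -> : inW k.+1 by rewrite /inW -E rinv_rho.
  move=> ew _.
  have kM : (k < M)%N by have := rhoM w; rewrite E.
  have ok : odd (runl inW k) by move: ew; rewrite /= negbK.
  have pk : inW k.
    by rewrite -runl_gt0; move: ok; case: (runl inW k).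
  exists (rinv k).
    rewrite inE; apply/andP; split; first exact: pk.
    by rewrite rho_rinv // ltnW.
  by rewrite sc_rinv // -E rinv_rho.
Qed.
End Comb.

Lemma face_of_G (R : realType) M (t : 'I_M.+1 -> R) n (W G : {set 'I_M.+1}) (j w0 : 'I_M.+1) :
  (forall i j : 'I_M.+1, (i < j)%N -> t i < t j) ->
  j \notin W -> w0 \in W -> G \subset W ->
  (forall w, w \in W -> w \in G \/ exists2 g, g \in G & w = sc g) ->
  (#|G| <= n)%N ->
  cyclic_face n.*2 t W.
Proof.
move=> tmono jW w0W GW cov cG.
have ti := tinj tmono.
pose g' (g : 'I_M.+1) := if sc g \in W then sc g else g.
pose sg (g : 'I_M.+1) : R := if (sc g \in W) && ((g : nat) == M) then -1 else 1.
pose F g : {poly R} := sg g *: (('X - (t g)%:P) * ('X - (t (g' g))%:P)).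
have Fv : forall g x, (F g).[x] = sg g * ((x - t g) * (x - t (g' g))).
  by move=> g x; rewrite hornerZ hornerM !hornerXsubC.
have sg0 : forall g, sg g != 0.
  by move=> g; rewrite /sg; case: ifP => _; rewrite ?oppr_eq0 oner_eq0.
have Fpos : forall g i, 0 <= (F g).[t i].
  move=> g i; rewrite Fv /sg /g'.
  have [sW|sW] := boolP (sc g \in W); last by rewrite /= mul1r -expr2 sqr_ge0.
  rewrite /=; have [gM|gM] := eqVneq (g : nat) M.
    rewrite mulN1r oppr_ge0; apply: mulr_le0_ge0.
      by rewrite subr_le0; apply: tle => //; rewrite gM -ltnS.
    by rewrite subr_ge0; apply: tle => //; rewrite scv gM eqxx.
  rewrite mul1r; have [ig|gi] := leqP i g.
    apply: mulr_le0; rewrite subr_le0; apply: tle => //.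
    by rewrite scv (negbTE gM); apply: leqW.
  by apply: mulr_ge0; rewrite subr_ge0; apply: tle => //; [apply: ltnW | rewrite scv (negbTE gM)].
have F0 : forall g i, ((F g).[t i] == 0) = (i == g) || (i == g' g).
  by move=> g i; rewrite Fv mulf_eq0 (negbTE (sg0 g)) /= mulf_eq0 !subr_eq0 !(inj_eq ti).
pose P := \prod_(g in G) F g.
have Pv : forall i, P.[t i] = \prod_(g in G) (F g).[t i] by move=> i; rewrite /P horner_prod.
have Ppos : forall i, 0 <= P.[t i] by move=> i; rewrite Pv; apply: prodr_ge0 => g _.
have P0 : forall i, (P.[t i] == 0) = (i \in W).
  move=> i; rewrite Pv; apply/prodf_eq0/idP => [[g gG]|iW].
    rewrite F0 => /orP [] /eqP ->; first by apply: (subsetP GW).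
    by rewrite /g'; case: ifP => // _; apply: (subsetP GW).
  case: (cov i iW) => [iG|[g gG ig]]; first by exists i => //; rewrite F0 eqxx.
  by exists g => //; rewrite F0 /g' -ig iW eqxx orbT.
have szF : forall g, (size (F g) <= 3)%N.
  move=> g; apply: (leq_trans (size_scale_leq _ _)); apply: (leq_trans (size_polyMleq _ _)).
  by rewrite !size_XsubC.
have szP : (size P <= n.*2.+1)%N.
  apply: (leq_trans (size_poly_prod_leq _ _)).
  have : (\sum_(g in G) size (F g) <= #|G| * 3)%N.
    by rewrite -sum_nat_const; apply: leq_sum => g _; apply: szF.
  move: cG; rewrite -/(#|G|); lia.
pose Q := - P.
have szQ : (size Q <= n.*2.+1)%N by rewrite size_polyN.
have ml0 : forall s, moment_lin (0 : 'rV[R]_(n.*2)) s = 0.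
  by move=> s; rewrite /moment_lin big1 // => k _; rewrite mxE mul0r.
right; exists (\row_(k < n.*2) Q`_k.+1), (- Q`_0); split.
  apply/eqP => c0.
  have e1 := poly_mpol (t w0) szQ; have e2 := poly_mpol (t j) szQ.
  rewrite c0 in e1 e2; rewrite ml0 in e1; rewrite ml0 in e2.
  have : P.[t j] == 0.
    have eQ : Q.[t j] = Q.[t w0] by rewrite e1 e2.
    move: eQ; rewrite /Q !hornerN => /oppr_inj ->.
    by rewrite P0.
  by rewrite P0 (negbTE jW).
move=> i; have e := poly_mpol (t i) szQ.
split; first by rewrite -subr_le0 -e hornerN oppr_le0.
by rewrite -subr_eq0 -e hornerN oppr_eq0 P0.
Qed.


Definition sparse M (S : {set 'I_M}) :=
  forall i j : 'I_M, i \in S -> j \in S -> (i < j)%N -> (i.+2 <= j)%N.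

Lemma subset_card (T : finType) (A : {set T}) k : (k <= #|A|)%N ->
  exists2 B : {set T}, B \subset A & #|B| = k.
Proof.
elim: k => [|k IH] hk; first by exists set0; rewrite ?sub0set ?cards0.
have [B BA cB] := IH (ltnW hk).
have : (0 < #|A :\: B|)%N by rewrite cardsD (setIidPr BA) cB subn_gt0.
case/card_gt0P => x; rewrite inE => /andP [xB xA].
exists (x |: B); first by rewrite subUset sub1set xA BA.
by rewrite cardsU1 xB cB.
Qed.

Lemma bad_nonface (R : realType) M (t : 'I_M.+1 -> R) n (S W : {set 'I_M.+1}) :
  (forall i j : 'I_M.+1, (i < j)%N -> t i < t j) ->
  #|S| = n.+1 -> sparse S ->
  ((forall i, i \in S -> (i < M)%N) \/ (forall i, i \in S -> (0 < i)%N)) ->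
  S \subset W -> ~ cyclic_face n.*2 t W.
Proof.
move=> tmono cS spS hS sSW [W0|[c [b [c0 hc]]]].
  by move: (subset_leq_card sSW); rewrite W0 cards0 cS.
have Ple : forall i, (mpol c b).[t i] <= 0.
  by move=> i; rewrite mpolE subr_le0; case: (hc i).
have PS : forall i, i \in S -> (mpol c b).[t i] = 0.
  move=> i iS; rewrite mpolE; apply/eqP; rewrite subr_eq0; case: (hc i) => _ ->.
  exact: (subsetP sSW).
have sz := mpol_size c b.
have : mpol c b = 0.
  case: hS => hS; [exact: (key1 tmono cS spS hS sz Ple PS) | exact: (key2 tmono cS spS hS sz Ple PS)].
by move/mpol_eq0/eqP; rewrite (negbTE c0).
Qed.

Lemma nonface_bad (R : realType) M (t : 'I_M.+1 -> R) n (W : {set 'I_M.+1}) :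
  (forall i j : 'I_M.+1, (i < j)%N -> t i < t j) ->
  (n.*2 < M)%N -> ~ cyclic_face n.*2 t W ->
  exists2 S : {set 'I_M.+1}, S \subset W & [/\ #|S| = n.+1, sparse S &
     ((forall i, i \in S -> (i < M)%N) \/ (forall i, i \in S -> (0 < i)%N))].
Proof.
move=> tmono dM nf.
apply: NNPP => nobad.
have nb : forall S : {set 'I_M.+1}, S \subset W -> #|S| = n.+1 -> sparse S ->
    ((forall i, i \in S -> (i < M)%N) \/ (forall i, i \in S -> (0 < i)%N)) -> False.
  by move=> S sSW cS spS hS; apply: nobad; exists S.
have [W0|[w0 w0W]] := set_0Vmem W; first by apply: nf; left.
case: (pickP (fun j => j \notin W)) => [j jW|allW].
  have [G [GW Gsp Gcov]] := comb jW.
  case: (leqP #|G| n) => cG.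
    by apply: nf; apply: (face_of_G tmono jW w0W GW Gcov cG).
  have [S sSG cS] := subset_card cG.
  have sSW : S \subset W := subset_trans sSG GW.
  have Ssp : forall a, a \in S -> sc a \notin S.
    move=> a aS; apply: contra (Gsp a (subsetP sSG a aS)); apply: (subsetP sSG).
  apply: (nb S sSW cS).
  - move=> a b aS bS ab.
    case: (eqVneq (b : nat) a.+1) => e; last by lia.
    have : sc a = b.
      apply/val_inj => /=; rewrite scv.
      have := ltn_ord b; case: eqP => [h|_]; [lia | by rewrite e].
    by move=> sab; have := Ssp a aS; rewrite sab bS.
  - case: (boolP [exists i in S, (i : nat) == M]) => [/existsP [x /andP [xS /eqP xM]]|hM].
      right => i iS; rewrite lt0n; apply/eqP => i0.
      have : sc x = i by apply/val_inj => /=; rewrite scv xM eqxx i0.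
      by move=> sxi; have := Ssp x xS; rewrite sxi iS.
    left => i iS; have := ltn_ord i; move: hM; rewrite negb_exists => /forallP /(_ i).
    by rewrite iS /= => /eqP; lia.
pose S0 := [set (inord (nat_of_ord k).*2 : 'I_M.+1) | k : 'I_n.+1].
have iK : forall k : 'I_n.+1, ((inord (nat_of_ord k).*2 : 'I_M.+1) : nat) = (nat_of_ord k).*2.
  by move=> k; rewrite inordK //; have := ltn_ord k; lia.
apply: (nb S0).
- by apply/subsetP => x _; move: (allW x) => /negbFE.
- rewrite card_imset ?card_ord //.
  by move=> a b /(congr1 (@nat_of_ord _)); rewrite !iK => /double_inj /val_inj.
- move=> a b /imsetP [x _ ->] /imsetP [y _ ->]; rewrite !iK; lia.
- by left => i /imsetP [x _ ->]; rewrite iK; have := ltn_ord x; lia.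
Qed.

Theorem lemma3p1 (k : fieldType) (R : realType) (d m : nat) (t : 'I_m -> R) :
  ~~ odd d -> (2 <= d)%N -> (d < m.-1)%N ->
  (forall i j : 'I_m, (i < j)%N -> t i < t j) ->
  forall p : {mpoly k[m]},
    @SR_ideal k m (@cyclic_face R d m t) p <->
    @ideal_gen k m (fun g => Iapq k m (d./2).+1 1 m.-1 g \/ Iapq k m (d./2).+1 2 m g) p.
Proof.
move=> ev d2 dm tmono p.
case: m t tmono dm p => [|M] t tmono dm p; first by [].
have dE : d = (d./2).*2 by rewrite -[LHS]odd_double_half (negbTE ev).
move: (d./2) dE => n dE; subst d.
rewrite /= in dm *.
split.
- apply: igmono => g [W [nf ->]].
  have [S sSW [cS spS hS]] := nonface_bad tmono dm nf.
  rewrite (@mon_split k _ W S sSW); apply: igM; apply: igG.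
  case: hS => hS; [left|right]; apply: igG; exists S; split => //.
  by move=> i iS; have := hS i iS; rewrite ltnS ltn_ord andbT.
- move=> h; apply: (igmono _ h) => g [] Hg; apply: (igmono _ Hg) => g' [S [cS hS spS ->]];
    apply: igG; exists S; split => //; apply: (bad_nonface tmono cS spS _ (subxx S)).
    by left => i iS; have := hS i iS; lia.
  by right => i iS; have := hS i iS; lia.
Qed.
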